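(* Let $F_0$ and $F_s$ be distribution functions, $U_r(t):=F_r^{\leftarrow}(1-1/t)=\bigl(1/(1-F_r)\bigr)^{\leftarrow}(t)$ for $t>1$, $r\in\{0,s\}$, and let $c\in\mathbb{R}$, $s\ge0$. Suppose $F_0$ is in the max-domain of attraction of $G_\gamma(x)=\exp\{-(1+\gamma x)^{-1/\gamma}\}$ for some $\gamma\in\mathbb{R}$, with a positive function $a_0$ such that $\lim_{t\to\infty}\frac{U_0(tx)-U_0(t)}{a_0(t)}=\frac{x^\gamma-1}{\gamma}$ for all $x>0$. Let $x^*:=\sup\{x:F_0(x)<1\}$. Then $$\lim_{x\uparrow x^*}\frac{1-F_s(x)}{1-F_0(x)}=e^{cs}\quad\Longleftrightarrow\quad\lim_{t\to\infty}\frac{U_s(t)-U_0(t)}{a_0(t)}=\frac{e^{c\gamma s}-1}{\gamma}.$$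
   Context: $F^{\leftarrow}$ denotes the generalized (left-continuous) inverse. For $\gamma=0$, $\frac{x^\gamma-1}{\gamma}$ means $\log x$, $(1+\gamma x)^{-1/\gamma}$ means $e^{-x}$, and $\frac{e^{c\gamma s}-1}{\gamma}$ means $cs$. *)

(* Defs.v *)
From Stdlib Require Import Reals.
From Coquelicot Require Import Coquelicot.
Open Scope R_scope.

Definition is_distribution_function (F : R -> R) : Prop :=
  (forall x y, x <= y -> F x <= F y) /\
  (forall x, filterlim F (at_right x) (locally (F x))) /\
  filterlim F (Rbar_locally m_infty) (locally 0) /\
  filterlim F (Rbar_locally p_infty) (locally 1).

Definition gen_inv (F : R -> R) (p : R) : Rbar :=
  Glb_Rbar (fun x => p <= F x).

(* U(t) = F^{<-}(1 - 1/t), meaningful (finite) for t > 1. *)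
Definition Uq (F : R -> R) (t : R) : R := real (gen_inv F (1 - / t)).

Definition hpow (gamma x : R) : R :=
  if Req_EM_T gamma 0 then ln x else (Rpower x gamma - 1) / gamma.

Definition hexp (gamma c s : R) : R :=
  if Req_EM_T gamma 0 then c * s else (exp (c * gamma * s) - 1) / gamma.

Definition GEV (gamma x : R) : R :=
  if Req_EM_T gamma 0 then exp (- exp (- x))
  else if Rlt_dec 0 (1 + gamma * x) then
    exp (- Rpower (1 + gamma * x) (- / gamma))
  else if Rlt_dec 0 gamma then 0 else 1.

(* Max-domain of attraction: F^n(a_n x + b_n) -> G_gamma(x) for all x
   (G_gamma is continuous, so every x is a continuity point). *)
Definition in_MDA (F : R -> R) (gamma : R) : Prop :=
  exists (a b : nat -> R), (forall n, 0 < a n) /\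
    forall x, is_lim_seq (fun n => (F (a n * x + b n)) ^ n) (GEV gamma x).

Definition right_endpoint (F : R -> R) : Rbar := Lub_Rbar (fun x => F x < 1).

(* Left-approach filter x ↑ x^* for x^* in Rbar (for x^* = +oo: x -> +oo). *)
Definition Rbar_at_left (x : Rbar) : (R -> Prop) -> Prop :=
  within (fun u => Rbar_lt u x) (Rbar_locally x).

(* Main.v *)
Require Import Defs.
From Stdlib Require Import Reals Lra.
From Coquelicot Require Import Coquelicot.
Open Scope R_scope.

Lemma lim_inf_iff (f : R -> R) l :
  filterlim f (Rbar_locally p_infty) (locally l) <->
  forall eps, 0 < eps -> exists M, forall t, M < t -> Rabs (f t - l) < eps.
Proof.
  split.
  - intros H eps Heps.
    destruct (proj1 (filterlim_locally f l) H (mkposreal eps Heps)) as [M HM].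
    exists M. intros t Ht. apply HM in Ht. exact Ht.
  - intros H. apply filterlim_locally. intros [eps Heps].
    destruct (H eps Heps) as [M HM]. exists M. intros t Ht. apply HM. exact Ht.
Qed.

Lemma RC (F : R -> R) x p : is_distribution_function F -> F x < p ->
  exists d, 0 < d /\ forall y, x <= y -> y < x + d -> F y < p.
Proof.
  intros [Hm [Hr _]] Hx.
  pose proof (Hr x) as H.
  destruct (proj1 (filterlim_locally F (F x)) H (mkposreal (p - F x) ltac:(lra))) as [d Hd].
  exists d. split. apply cond_pos. intros y H1 H2.
  destruct (Req_dec y x) as [->|Hne]. lra.
  assert (B : ball x d y).
  { change (Rabs (y - x) < d). rewrite Rabs_right; lra. }
  specialize (Hd y B ltac:(lra)). change (Rabs (F y - F x) < p - F x) in Hd.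
  apply Rabs_def2 in Hd. lra.
Qed.

Lemma QE (F : R -> R) t : is_distribution_function F -> 1 < t ->
  forall y, 1 - / t <= F y <-> Uq F t <= y.
Proof.
  intros HF Ht.
  set (p := 1 - / t).
  assert (Hp0 : 0 < p).
  { unfold p. assert (/ t < 1). { rewrite <- Rinv_1. apply Rinv_lt_contravar; lra. } lra. }
  assert (Hp1 : p < 1). { unfold p. assert (0 < / t) by (apply Rinv_0_lt_compat; lra). lra. }
  destruct HF as [Hm [Hr [Hminf Hpinf]]].
  destruct (proj1 (filterlim_locally F 1) Hpinf (mkposreal (1 - p) ltac:(lra))) as [M1 HM1].
  destruct (proj1 (filterlim_locally F 0) Hminf (mkposreal p Hp0)) as [M2 HM2].
  assert (E1 : p <= F (M1 + 1)).
  { specialize (HM1 (M1 + 1) ltac:(lra)). change (Rabs (F (M1+1) - 1) < 1 - p) in HM1.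
    apply Rabs_def2 in HM1. lra. }
  assert (LB : forall x, p <= F x -> M2 <= x).
  { intros x Hx. destruct (Rle_lt_dec M2 x) as [h|h]; auto.
    specialize (HM2 x h). change (Rabs (F x - 0) < p) in HM2. apply Rabs_def2 in HM2. lra. }
  destruct (Glb_Rbar_correct (fun x => p <= F x)) as [Hlb Hglb].
  unfold Uq, gen_inv. fold p.
  assert (Hle1 : Rbar_le (Glb_Rbar (fun x => p <= F x)) (M1 + 1)) by (apply Hlb; exact E1).
  assert (Hle2 : Rbar_le M2 (Glb_Rbar (fun x => p <= F x))).
  { apply Hglb. intros x Hx. simpl. apply LB. exact Hx. }
  destruct (Glb_Rbar (fun x => p <= F x)) as [q| |] eqn:Eq; simpl in Hle1, Hle2; try contradiction.
  simpl. intros y. split.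
  - intros Hy. exact (Hlb y Hy).
  - intros Hy. destruct (Rle_lt_dec p (F y)) as [h|h]; auto.
    exfalso.
    destruct (RC F y p (conj Hm (conj Hr (conj Hminf Hpinf))) h) as [d [Hd Hd']].
    assert (Hb : Rbar_le (y + d/2) q).
    { apply Hglb. intros z Hz. simpl.
      destruct (Rle_lt_dec (y + d/2) z) as [h2|h2]; auto. exfalso.
      destruct (Rle_lt_dec y z) as [h3|h3].
      + specialize (Hd' z h3 ltac:(lra)). lra.
      + specialize (Hm z y ltac:(lra)). lra. }
    simpl in Hb. lra.
Qed.

Lemma endpt (F : R -> R) (u : R) : is_distribution_function F ->
  (Rbar_lt u (right_endpoint F) <-> F u < 1).
Proof.
  intros HF. pose proof HF as [Hm _].
  destruct (Lub_Rbar_correct (fun x => F x < 1)) as [Hub Hlub].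
  unfold right_endpoint. split.
  - intros Hlt. destruct (Rlt_le_dec (F u) 1) as [h|h]; auto. exfalso.
    assert (Hl : Rbar_le (Lub_Rbar (fun x => F x < 1)) u).
    { apply Hlub. intros x Hx. simpl. destruct (Rle_lt_dec x u) as [h2|h2]; auto.
      specialize (Hm u x ltac:(lra)). lra. }
    destruct (Lub_Rbar (fun x => F x < 1)); simpl in *; try contradiction; lra.
  - intros Hu. destruct (RC F u 1 HF Hu) as [d [Hd Hd']].
    assert (H2 : Rbar_le (u + d/2) (Lub_Rbar (fun x => F x < 1))).
    { apply Hub. apply Hd'; lra. }
    destruct (Lub_Rbar (fun x => F x < 1)); simpl in *; try contradiction; lra.
Qed.

Lemma lim_left_iff (F : R -> R) (f : R -> R) l : is_distribution_function F ->
  filterlim f (Rbar_at_left (right_endpoint F)) (locally l) <->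
  forall eps, 0 < eps -> exists b, F b < 1 /\
     forall u, b < u -> F u < 1 -> Rabs (f u - l) < eps.
Proof.
  intros HF.
  assert (Hb0 : exists b, F b < 1).
  { destruct HF as [_ [_ [Hminf _]]].
    destruct (proj1 (filterlim_locally F 0) Hminf (mkposreal (1/2) ltac:(lra))) as [M HM].
    exists (M - 1). specialize (HM (M-1) ltac:(lra)). change (Rabs (F (M-1) - 0) < 1/2) in HM.
    apply Rabs_def2 in HM. lra. }
  split.
  - intros H eps Heps.
    pose proof (proj1 (filterlim_locally f l) H (mkposreal eps Heps)) as HH.
    unfold Rbar_at_left, within in HH.
    destruct (right_endpoint F) as [x| |] eqn:E.
    + destruct HH as [d Hd]. exists (x - d). split.
      * apply (endpt F (x - d) HF). try rewrite E; simpl. simpl. destruct d; simpl; lra.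
      * intros u H1 H2. apply (endpt F u HF) in H2. rewrite E in H2. simpl in H2.
        apply Hd. change (Rabs (u - x) < d). rewrite Rabs_left; lra.
        try rewrite E; simpl. exact H2.
    + destruct HH as [M HM]. exists M. split.
      * apply (endpt F M HF). try rewrite E; simpl. simpl. exact I.
      * intros u H1 H2. apply HM. exact H1. try rewrite <- E. apply (endpt F u HF). exact H2.
    + destruct Hb0 as [b Hb]. exists b. split; auto. intros u _ H2.
      apply (endpt F u HF) in H2. rewrite E in H2. simpl in H2. contradiction.
  - intros H. apply filterlim_locally. intros [eps Heps].
    destruct (H eps Heps) as [b [Hb Hb']].
    unfold Rbar_at_left, within.
    pose proof (proj2 (endpt F b HF) Hb) as Hblt.
    destruct (right_endpoint F) as [x| |] eqn:E.
    + simpl in Hblt. exists (mkposreal (x - b) ltac:(lra)). intros y Hy Hyx.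
      change (Rabs (y - x) < x - b) in Hy. simpl in Hyx. apply Rabs_def2 in Hy.
      change (Rabs (f y - l) < eps). apply Hb'. lra. apply (endpt F y HF). try rewrite E; simpl. exact Hyx.
    + exists b. intros y Hy Hyx. change (Rabs (f y - l) < eps). apply Hb'. exact Hy. apply (endpt F y HF). try rewrite E; simpl. exact Hyx.
    + simpl in Hblt. contradiction.
Qed.

Lemma hexp_eq gamma c s : hexp gamma c s = hpow gamma (exp (c * s)).
Proof.
  unfold hexp, hpow. destruct (Req_EM_T gamma 0).
  - rewrite ln_exp. reflexivity.
  - unfold Rpower. rewrite ln_exp. f_equal. f_equal. f_equal. ring.
Qed.

Lemma hpow_1 gamma : hpow gamma 1 = 0.
Proof.
  unfold hpow. destruct (Req_EM_T gamma 0).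
  - apply ln_1.
  - unfold Rpower. rewrite ln_1, Rmult_0_r, exp_0. field. exact n.
Qed.

Lemma hpow_lt gamma x y : 0 < x -> x < y -> hpow gamma x < hpow gamma y.
Proof.
  intros Hx Hxy. unfold hpow. pose proof (ln_increasing x y Hx Hxy) as Hl.
  destruct (Req_EM_T gamma 0) as [e|n]. exact Hl.
  unfold Rpower. destruct (Rlt_dec 0 gamma) as [g|g].
  - assert (exp (gamma * ln x) < exp (gamma * ln y)).
    { apply exp_increasing. nra. }
    unfold Rdiv. apply Rmult_lt_compat_r. apply Rinv_0_lt_compat; lra. lra.
  - assert (gamma < 0) by lra.
    assert (exp (gamma * ln y) < exp (gamma * ln x)).
    { apply exp_increasing. nra. }
    apply (Rmult_lt_reg_r (- gamma)). lra.
    unfold Rdiv. replace ((exp (gamma * ln x) - 1) * / gamma * - gamma) with (- (exp (gamma * ln x) - 1)) by (field; lra).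
    replace ((exp (gamma * ln y) - 1) * / gamma * - gamma) with (- (exp (gamma * ln y) - 1)) by (field; lra).
    lra.
Qed.

Lemma hpow_cont gamma x : 0 < x -> forall eps, 0 < eps -> exists rho, 0 < rho /\
  forall y, Rabs (y - x) < rho -> Rabs (hpow gamma y - hpow gamma x) < eps.
Proof.
  intros Hx eps Heps.
  assert (C : continuous (hpow gamma) x).
  { apply (@ex_derive_continuous R_AbsRing R_NormedModule). unfold hpow. destruct (Req_EM_T gamma 0).
    - auto_derive. exact Hx.
    - unfold Rpower. auto_derive. exact Hx. }
  destruct (proj1 (filterlim_locally (hpow gamma) (hpow gamma x)) C (mkposreal eps Heps)) as [d Hd].
  exists d. split. apply cond_pos. intros y Hy. apply (Hd y). exact Hy.
Qed.

Lemma div_lt_num a X Y : 0 < a -> X / a < Y / a -> X < Y.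
Proof. intros Ha H. apply (Rmult_lt_reg_r (/ a)). apply Rinv_0_lt_compat; lra. exact H. Qed.
Lemma div_le_mono a X Y : 0 < a -> X <= Y -> X / a <= Y / a.
Proof. intros Ha H. apply Rmult_le_compat_r. left; apply Rinv_0_lt_compat; lra. exact H. Qed.
Lemma ratio_le p X k : 0 < p -> X <= k * p -> X / p <= k.
Proof. intros Hp H. apply (Rmult_le_reg_r p). exact Hp. unfold Rdiv. rewrite Rmult_assoc, Rinv_l by lra. lra. Qed.
Lemma ratio_gt p X k : 0 < p -> k * p < X -> k < X / p.
Proof. intros Hp H. apply (Rmult_lt_reg_r p). exact Hp. unfold Rdiv. rewrite Rmult_assoc, Rinv_l by lra. lra. Qed.
Lemma mul_gt a M t : 0 < a -> M * a < t -> M < t / a.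
Proof. intros Ha H. apply (Rmult_lt_reg_r a). exact Ha. unfold Rdiv. rewrite Rmult_assoc, Rinv_l by lra. lra. Qed.
Lemma inv_small k T : 0 < k -> / k < T -> / T < k.
Proof. intros Hk H. assert (0 < / k) by (apply Rinv_0_lt_compat; lra).
  rewrite <- (Rinv_inv k). apply Rinv_lt_contravar. nra. exact H. Qed.

Section S.
Variables (F0 Fs a0 : R -> R) (gamma lam : R).
Hypotheses (HF0 : is_distribution_function F0) (HFs : is_distribution_function Fs)
  (Ha : forall t, 0 < a0 t) (Hlam : 0 < lam)
  (HU : forall x, 0 < x -> forall eps, 0 < eps -> exists M, forall t, M < t ->
     Rabs ((Uq F0 (t * x) - Uq F0 t) / a0 t - hpow gamma x) < eps).

Lemma Ustrict : exists M3, forall T, M3 < T -> 1 < T /\ F0 (Uq F0 T) < 1.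
Proof.
  assert (Hg : 0 < hpow gamma 2). { rewrite <- (hpow_1 gamma). apply hpow_lt; lra. }
  destruct (HU 2 ltac:(lra) _ Hg) as [M HM].
  exists (Rmax M 1). intros T HT.
  assert (T1 : 1 < T) by (pose proof (Rmax_r M 1); lra).
  assert (T2 : M < T) by (pose proof (Rmax_l M 1); lra).
  split. exact T1.
  specialize (HM T T2). apply Rabs_def2 in HM.
  assert (Hq : 0 < (Uq F0 (T * 2) - Uq F0 T) / a0 T) by lra.
  assert (Hd : Uq F0 T < Uq F0 (T * 2)).
  { assert (0 < Uq F0 (T * 2) - Uq F0 T); [|lra].
    apply (div_lt_num (a0 T)). apply Ha. unfold Rdiv at 1. rewrite Rmult_0_l. exact Hq. }
  destruct (Rlt_le_dec (F0 (Uq F0 T)) (1 - / (T * 2))) as [h|h].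
  - assert (0 < / (T * 2)) by (apply Rinv_0_lt_compat; lra). lra.
  - apply (QE F0 (T * 2) HF0 ltac:(lra)) in h. lra.
Qed.

Lemma Ubig b : F0 b < 1 -> exists M4, forall T, M4 < T -> b < Uq F0 T.
Proof.
  intros Hb. exists (Rmax 1 (/ (1 - F0 b))). intros T HT.
  pose proof (Rmax_l 1 (/ (1 - F0 b))). pose proof (Rmax_r 1 (/ (1 - F0 b))).
  assert (H1 : / T < 1 - F0 b) by (apply inv_small; lra).
  destruct (Rlt_le_dec b (Uq F0 T)) as [h|h]; auto.
  apply (QE F0 T HF0 ltac:(lra)) in h. lra.
Qed.


Lemma forward :
  (forall eps, 0 < eps -> exists b, F0 b < 1 /\ forall u, b < u -> F0 u < 1 ->
      Rabs ((1 - Fs u) / (1 - F0 u) - lam) < eps) ->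
  forall eps, 0 < eps -> exists M, forall t, M < t ->
      Rabs ((Uq Fs t - Uq F0 t) / a0 t - hpow gamma lam) < eps.
Proof.
  intros Htail eps Heps.
  destruct (hpow_cont gamma lam Hlam (eps/2) ltac:(lra)) as [rho [Hrho Hc]].
  set (d := Rmin (1/2) (rho / (2 * lam))).
  assert (Hd0 : 0 < d). { apply Rmin_pos. lra. apply Rdiv_lt_0_compat; lra. }
  assert (Hd1 : d <= 1/2) by apply Rmin_l.
  assert (Hd2 : lam * d <= rho / 2).
  { assert (d <= rho / (2 * lam)) by apply Rmin_r.
    assert (lam * (rho / (2 * lam)) = rho / 2) by (field; lra). nra. }
  assert (G1 : Rabs (hpow gamma (lam * (1 + d)) - hpow gamma lam) < eps / 2).
  { apply Hc. replace (lam * (1 + d) - lam) with (lam * d) by ring.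
    rewrite Rabs_right; nra. }
  assert (G2 : Rabs (hpow gamma (lam * (1 - d)) - hpow gamma lam) < eps / 2).
  { apply Hc. replace (lam * (1 - d) - lam) with (- (lam * d)) by ring.
    rewrite Rabs_Ropp. rewrite Rabs_right; nra. }
  apply Rabs_def2 in G1. apply Rabs_def2 in G2.
  destruct (Htail (lam * d) ltac:(nra)) as [b [Hb Hb']].
  destruct (HU (lam * (1 + d)) ltac:(nra) (eps/2) ltac:(lra)) as [M1 HM1].
  destruct (HU (lam * (1 - d)) ltac:(nra) (eps/2) ltac:(lra)) as [M2 HM2].
  destruct Ustrict as [M3 HM3].
  destruct (Ubig b Hb) as [M4 HM4].
  set (K := Rmax 1 (Rmax M3 M4)).
  assert (HK1 : 1 <= K) by apply Rmax_l.
  assert (HK3 : M3 <= K) by (eapply Rle_trans; [apply Rmax_l|apply Rmax_r]).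
  assert (HK4 : M4 <= K) by (eapply Rle_trans; [apply Rmax_r|apply Rmax_r]).
  assert (Hld : 0 < lam * (1 - d)) by nra.
  exists (Rmax (Rmax 1 (Rmax M1 M2)) (K / (lam * (1 - d)))).
  intros t Ht.
  assert (Ht1 : 1 < t) by (eapply Rle_lt_trans; [eapply Rle_trans; [apply Rmax_l|apply Rmax_l]|exact Ht]).
  assert (HtM1 : M1 < t).
  { eapply Rle_lt_trans; [|exact Ht]. eapply Rle_trans; [|apply Rmax_l].
    eapply Rle_trans; [|apply Rmax_r]. apply Rmax_l. }
  assert (HtM2 : M2 < t).
  { eapply Rle_lt_trans; [|exact Ht]. eapply Rle_trans; [|apply Rmax_l].
    eapply Rle_trans; [|apply Rmax_r]. apply Rmax_r. }
  assert (HtK : K < t * (lam * (1 - d))).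
  { assert (K / (lam * (1 - d)) < t) by (eapply Rle_lt_trans; [apply Rmax_r|exact Ht]).
    assert (K = K / (lam * (1 - d)) * (lam * (1 - d))) by (field; lra).
    nra. }
  set (T1 := t * (lam * (1 + d))). set (T2 := t * (lam * (1 - d))).
  assert (HT12 : T2 < T1) by (unfold T1, T2; nra).
  assert (HT2K : K < T2) by exact HtK.
  assert (Hlp : 0 < lam * (1 + d)) by (apply Rmult_lt_0_compat; lra).
  assert (Up : Uq Fs t <= Uq F0 T1).
  { apply (QE Fs t HFs Ht1).
    set (y := Uq F0 T1).
    assert (Hy1 : F0 y < 1) by (apply (proj2 (HM3 T1 ltac:(lra)))).
    assert (Hy2 : b < y) by (apply HM4; lra).
    pose proof (Hb' y Hy2 Hy1) as Hr. apply Rabs_def2 in Hr.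
    assert (Hq : 1 - / T1 <= F0 y) by (apply (QE F0 T1 HF0 ltac:(lra)); apply Rle_refl).
    assert (Hp : 0 < 1 - F0 y) by lra.
    assert (Hr' : (1 - Fs y) / (1 - F0 y) < lam * (1 + d)) by lra.
    assert (E1 : 1 - Fs y = (1 - Fs y) / (1 - F0 y) * (1 - F0 y)) by (field; lra).
    assert (E2 : (1 - Fs y) / (1 - F0 y) * (1 - F0 y) < lam * (1 + d) * (1 - F0 y))
      by (apply Rmult_lt_compat_r; lra).
    assert (E3 : lam * (1 + d) * (1 - F0 y) <= lam * (1 + d) * / T1)
      by (apply Rmult_le_compat_l; lra).
    assert (E4 : lam * (1 + d) * / T1 = / t) by (unfold T1; field; lra).
    lra. }
  assert (Lo : Uq F0 T2 <= Uq Fs t).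
  { destruct (Rle_lt_dec (Uq F0 T2) (Uq Fs t)) as [h|h]; auto. exfalso.
    assert (Hb2 : b < Uq F0 T2) by (apply HM4; lra).
    set (z := Rmax (Uq Fs t) ((b + Uq F0 T2) / 2)).
    assert (Z1 : Uq Fs t <= z) by apply Rmax_l.
    assert (Z2 : (b + Uq F0 T2) / 2 <= z) by apply Rmax_r.
    assert (Z3 : z < Uq F0 T2) by (unfold z; apply Rmax_lub_lt; lra).
    assert (Hfs : 1 - / t <= Fs z) by (apply (QE Fs t HFs Ht1); exact Z1).
    assert (Hf0 : F0 z < 1 - / T2).
    { destruct (Rlt_le_dec (F0 z) (1 - / T2)) as [h2|h2]; auto.
      apply (QE F0 T2 HF0 ltac:(lra)) in h2. lra. }
    assert (0 < / T2) by (apply Rinv_0_lt_compat; lra).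
    pose proof (Hb' z ltac:(lra) ltac:(lra)) as Hr. apply Rabs_def2 in Hr.
    assert (Hp : / T2 < 1 - F0 z) by lra.
    assert (Hr' : lam * (1 - d) < (1 - Fs z) / (1 - F0 z)) by lra.
    assert (E1 : 1 - Fs z = (1 - Fs z) / (1 - F0 z) * (1 - F0 z)) by (field; lra).
    assert (E2 : lam * (1 - d) * (1 - F0 z) < (1 - Fs z) / (1 - F0 z) * (1 - F0 z))
      by (apply Rmult_lt_compat_r; lra).
    assert (E3 : lam * (1 - d) * / T2 < lam * (1 - d) * (1 - F0 z))
      by (apply Rmult_lt_compat_l; lra).
    assert (E4 : lam * (1 - d) * / T2 = / t) by (unfold T2; field; lra).
    lra. }
  specialize (HM1 t HtM1). specialize (HM2 t HtM2). fold T1 in HM1. fold T2 in HM2.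
  apply Rabs_def2 in HM1. apply Rabs_def2 in HM2.
  assert (Q1 : (Uq Fs t - Uq F0 t) / a0 t <= (Uq F0 T1 - Uq F0 t) / a0 t)
    by (apply div_le_mono; [apply Ha|lra]).
  assert (Q2 : (Uq F0 T2 - Uq F0 t) / a0 t <= (Uq Fs t - Uq F0 t) / a0 t)
    by (apply div_le_mono; [apply Ha|lra]).
  apply Rabs_def1; lra.
Qed.

Lemma backward :
  (forall eps, 0 < eps -> exists M, forall t, M < t ->
      Rabs ((Uq Fs t - Uq F0 t) / a0 t - hpow gamma lam) < eps) ->
  forall eps, 0 < eps -> exists b, F0 b < 1 /\ forall u, b < u -> F0 u < 1 ->
      Rabs ((1 - Fs u) / (1 - F0 u) - lam) < eps.
Proof.
  intros Hq eps Heps.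
  set (d := Rmin (1/2) (eps / (4 * lam))).
  assert (Hd0 : 0 < d). { apply Rmin_pos. lra. apply Rdiv_lt_0_compat; lra. }
  assert (Hd1 : d <= 1/2) by apply Rmin_l.
  assert (Hd2 : lam * d <= eps / 4).
  { assert (d <= eps / (4 * lam)) by apply Rmin_r.
    assert (lam * (eps / (4 * lam)) = eps / 4) by (field; lra). nra. }
  assert (Hlp : 0 < lam * (1 + d)) by (apply Rmult_lt_0_compat; lra).
  assert (Hlm : 0 < lam * (1 - d)) by (apply Rmult_lt_0_compat; lra).
  assert (D1 : hpow gamma lam < hpow gamma (lam * (1 + d))) by (apply hpow_lt; nra).
  assert (D2 : hpow gamma (lam * (1 - d)) < hpow gamma lam) by (apply hpow_lt; nra).
  set (e := Rmin (hpow gamma (lam * (1 + d)) - hpow gamma lam)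
                 (hpow gamma lam - hpow gamma (lam * (1 - d))) / 2).
  assert (He0 : 0 < e). { unfold e. apply Rdiv_lt_0_compat; [apply Rmin_pos; lra|lra]. }
  assert (He1 : 2 * e <= hpow gamma (lam * (1 + d)) - hpow gamma lam).
  { unfold e. pose proof (Rmin_l (hpow gamma (lam * (1 + d)) - hpow gamma lam)
                 (hpow gamma lam - hpow gamma (lam * (1 - d)))). lra. }
  assert (He2 : 2 * e <= hpow gamma lam - hpow gamma (lam * (1 - d))).
  { unfold e. pose proof (Rmin_r (hpow gamma (lam * (1 + d)) - hpow gamma lam)
                 (hpow gamma lam - hpow gamma (lam * (1 - d)))). lra. }
  destruct (Hq e He0) as [M0 HM0].
  destruct (HU (lam * (1 + d)) Hlp e He0) as [M1 HM1].
  destruct (HU (lam * (1 - d)) Hlm e He0) as [M2 HM2].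
  set (M := Rmax 1 (Rmax M0 (Rmax M1 M2))).
  assert (HM1' : 1 <= M) by apply Rmax_l.
  assert (HMa : M0 <= M) by (eapply Rle_trans; [apply Rmax_l|apply Rmax_r]).
  assert (HMb : M1 <= M) by (eapply Rle_trans; [|apply Rmax_r];
                             eapply Rle_trans; [apply Rmax_l|apply Rmax_r]).
  assert (HMc : M2 <= M) by (eapply Rle_trans; [|apply Rmax_r];
                             eapply Rle_trans; [apply Rmax_r|apply Rmax_r]).
  assert (Key : forall t, M < t ->
     Uq Fs t < Uq F0 (t * (lam * (1 + d))) /\ Uq F0 (t * (lam * (1 - d))) < Uq Fs t).
  { intros t Ht.
    specialize (HM0 t ltac:(lra)). specialize (HM1 t ltac:(lra)). specialize (HM2 t ltac:(lra)).
    apply Rabs_def2 in HM0. apply Rabs_def2 in HM1. apply Rabs_def2 in HM2.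
    split.
    - assert (Uq Fs t - Uq F0 t < Uq F0 (t * (lam * (1 + d))) - Uq F0 t); [|lra].
      apply (div_lt_num (a0 t)). apply Ha. lra.
    - assert (Uq F0 (t * (lam * (1 - d))) - Uq F0 t < Uq Fs t - Uq F0 t); [|lra].
      apply (div_lt_num (a0 t)). apply Ha. lra. }
  destruct Ustrict as [M3 HM3].
  set (K := Rmax (Rmax 2 M3) (2 * lam * (M + 1)) + 1).
  assert (HK2 : 2 < K).
  { unfold K. pose proof (Rmax_l (Rmax 2 M3) (2 * lam * (M + 1))). pose proof (Rmax_l 2 M3). lra. }
  assert (HK3 : M3 < K).
  { unfold K. pose proof (Rmax_l (Rmax 2 M3) (2 * lam * (M + 1))). pose proof (Rmax_r 2 M3). lra. }
  assert (HKl : 2 * lam * (M + 1) < K).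
  { unfold K. pose proof (Rmax_r (Rmax 2 M3) (2 * lam * (M + 1))). lra. }
  exists (Uq F0 K). split. apply (proj2 (HM3 K HK3)).
  intros u Hu Hu1.
  assert (HFu : 1 - / K <= F0 u) by (apply (QE F0 K HF0 ltac:(lra)); lra).
  set (p := 1 - F0 u).
  assert (Hp : 0 < p) by (unfold p; lra).
  assert (HpK : p <= / K) by (unfold p; lra).
  set (tau := / p).
  assert (Htaup : tau * p = 1) by (unfold tau; field; lra).
  assert (Htau : K <= tau).
  { unfold tau. rewrite <- (Rinv_inv K). apply Rinv_le_contravar. exact Hp. exact HpK. }
  assert (HF0u : F0 u = 1 - / tau) by (unfold tau; rewrite Rinv_inv; unfold p; ring).
  assert (HlM : lam * M < tau / 2) by nra.
  set (t1 := tau / (lam * (1 + d))).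
  assert (Ht1M : M < t1).
  { unfold t1. apply mul_gt. exact Hlp. nra. }
  assert (Ht1e : t1 * (lam * (1 + d)) = tau) by (unfold t1; field; lra).
  destruct (Key t1 Ht1M) as [K1 _]. rewrite Ht1e in K1.
  assert (HUt : Uq F0 tau <= u) by (apply (QE F0 tau HF0 ltac:(lra)); lra).
  assert (HFs1 : 1 - / t1 <= Fs u) by (apply (QE Fs t1 HFs ltac:(lra)); lra).
  assert (Ei1 : / t1 = lam * (1 + d) * p).
  { unfold t1, tau. field. repeat split; lra. }
  assert (Up : (1 - Fs u) / (1 - F0 u) <= lam * (1 + d)).
  { fold p. apply ratio_le. exact Hp. lra. }
  set (t2 := tau * (1 + d) / (lam * (1 - d))).
  assert (Ht2M : M < t2).
  { unfold t2. apply mul_gt. exact Hlm. nra. }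
  assert (Ht2e : t2 * (lam * (1 - d)) = tau * (1 + d)) by (unfold t2; field; lra).
  destruct (Key t2 Ht2M) as [_ K2]. rewrite Ht2e in K2.
  assert (Hu2 : u < Uq F0 (tau * (1 + d))).
  { destruct (Rlt_le_dec u (Uq F0 (tau * (1 + d)))) as [h|h]; auto. exfalso.
    apply (QE F0 (tau * (1 + d)) HF0 ltac:(nra)) in h.
    assert (/ (tau * (1 + d)) < / tau) by (apply Rinv_lt_contravar; nra).
    lra. }
  assert (HFs2 : Fs u < 1 - / t2).
  { destruct (Rlt_le_dec (Fs u) (1 - / t2)) as [h|h]; auto.
    apply (QE Fs t2 HFs ltac:(lra)) in h. lra. }
  assert (Ei2 : / t2 = lam * (1 - d) / (1 + d) * p).
  { unfold t2, tau. field. repeat split; lra. }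
  assert (Lo : lam * (1 - d) / (1 + d) < (1 - Fs u) / (1 - F0 u)).
  { fold p. apply ratio_gt. exact Hp. lra. }
  assert (Lo2 : lam * (1 - 2 * d) <= lam * (1 - d) / (1 + d)).
  { apply (Rmult_le_reg_r (1 + d)). lra.
    replace (lam * (1 - d) / (1 + d) * (1 + d)) with (lam * (1 - d)) by (field; lra).
    nra. }
  assert (lam * (1 + d) = lam + lam * d) by ring.
  assert (lam * (1 - 2 * d) = lam - 2 * (lam * d)) by ring.
  unfold p. apply Rabs_def1; lra.
Qed.

End S.

Theorem mainTheorem4 (F0 Fs a0 : R -> R) (gamma c s : R) :
  is_distribution_function F0 ->
  is_distribution_function Fs ->
  0 <= s ->
  in_MDA F0 gamma ->
  (forall t, 0 < a0 t) ->
  (forall x, 0 < x ->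
     filterlim (fun t => (Uq F0 (t * x) - Uq F0 t) / a0 t)
       (Rbar_locally p_infty) (locally (hpow gamma x))) ->
  (filterlim (fun x => (1 - Fs x) / (1 - F0 x))
      (Rbar_at_left (right_endpoint F0)) (locally (exp (c * s)))
   <->
   filterlim (fun t => (Uq Fs t - Uq F0 t) / a0 t)
      (Rbar_locally p_infty) (locally (hexp gamma c s))).
Proof.
  intros HF0 HFs _ _ Ha HU.
  assert (HU' : forall x, 0 < x -> forall eps, 0 < eps -> exists M, forall t, M < t ->
     Rabs ((Uq F0 (t * x) - Uq F0 t) / a0 t - hpow gamma x) < eps).
  { intros x Hx. apply (proj1 (lim_inf_iff _ _) (HU x Hx)). }
  rewrite hexp_eq.
  assert (Hlam : 0 < exp (c * s)) by apply exp_pos.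
  rewrite (lim_left_iff F0 _ _ HF0), lim_inf_iff.
  split.
  - apply (forward F0 Fs a0 gamma (exp (c * s)) HF0 HFs Ha Hlam HU').
  - apply (backward F0 Fs a0 gamma (exp (c * s)) HF0 HFs Ha Hlam HU').
Qed.
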